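(* Let $T$ be a tree of order $n \geq 4$ which is not the star $S_n$ and not one of the paths $P_4$, $P_5$, $P_6$. Then $$|E(\Lambda(T))| \geq \tfrac{1}{2}\, n\,(n - D(T)).$$
   Context: All graphs are simple and finite. For a graph $G$ and disjoint $X, Y \subseteq V(G)$, $E(X,Y)$ denotes the set of edges with one endpoint in $X$ and the other in $Y$. An ordered pair $(X,Y)$ of disjoint subsets of $V(G)$ with $|X|=|Y|=2$ is an odd pair of $G$ if $|E(X,Y)|$ is odd. A $2$-subset $\{u,v\}\subseteq V(G)$ is an odd set if it is the first component of some odd pair of $G$. The graph $\Lambda(G)$ has vertex set $V(G)$, and $uv$ is an edge of $\Lambda(G)$ iff $\{u,v\}$ is an odd set of $G$. For a tree $T$, $D(T)$ denotes the maximum, over vertices $w$ of $T$, of the number of leaves of $T$ adjacent to $w$. $S_n$ is the star and $P_k$ the path on $k$ vertices. *)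

(* Defs.v *)
From mathcomp Require Import all_boot.
Set Implicit Arguments. Unset Strict Implicit. Unset Printing Implicit Defensive.

Definition simple_graph (T : finType) (e : rel T) : Prop :=
  symmetric e /\ irreflexive e.

Definition connected_graph (T : finType) (e : rel T) : Prop :=
  forall x y : T, connect e x y.

Definition acyclic_graph (T : finType) (e : rel T) : Prop :=
  forall (x : T) (p : seq T), path e x p -> uniq (x :: p) -> 2 <= size p ->
    ~~ e (last x p) x.

Definition is_tree (T : finType) (e : rel T) : Prop :=
  simple_graph e /\ connected_graph e /\ acyclic_graph e.

Definition isomorphic_to (T : finType) (e : rel T) (n : nat) (f : rel 'I_n) : Prop :=
  exists g : T -> 'I_n, bijective g /\ forall x y, e x y = f (g x) (g y).

Definition star_rel (n : nat) : rel 'I_n :=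
  fun i j => (i != j) && ((val i == 0) || (val j == 0)).

Definition path_rel (n : nat) : rel 'I_n :=
  fun i j => (val i == (val j).+1) || (val j == (val i).+1).

(* E(X,Y): edges with one endpoint in X and the other in Y (X, Y disjoint),
   encoded as ordered pairs (x, y) with x in X, y in Y. *)
Definition cross_edges (T : finType) (e : rel T) (X Y : {set T}) : {set T * T} :=
  [set xy | (xy.1 \in X) && (xy.2 \in Y) && e xy.1 xy.2].

Definition odd_pair (T : finType) (e : rel T) (X Y : {set T}) : bool :=
  [&& #|X| == 2, #|Y| == 2, [disjoint X & Y] & odd #|cross_edges e X Y|].

Definition odd_set (T : finType) (e : rel T) (X : {set T}) : bool :=
  [exists Y : {set T}, odd_pair e X Y].

(* Number of edges of Lambda(G): number of 2-subsets that are odd sets. *)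
Definition lambda_edges (T : finType) (e : rel T) : nat :=
  #|[set X : {set T} | (#|X| == 2) && odd_set e X]|.

Definition is_leaf (T : finType) (e : rel T) (u : T) : bool :=
  #|[set v | e u v]| == 1.

Definition Dleaf (T : finType) (e : rel T) : nat :=
  \max_(w : T) #|[set u | e w u && is_leaf e u]|.

(* Main.v *)
Require Import Defs.
From mathcomp Require Import all_boot.
From mathcomp Require Import zify.
Set Implicit Arguments. Unset Strict Implicit. Unset Printing Implicit Defensive.

Ltac neqs := repeat match goal with |- is_true (_ && _) => apply/andP; split end;
  try (by []); try (by rewrite eq_sym).

Section Tree.
Variable T : finType.
Variable e : rel T.
Hypothesis esym : symmetric e.
Hypothesis eirr : irreflexive e.
Hypothesis econ : connected_graph e.
Hypothesis eacy : acyclic_graph e.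

Lemma ecut (S : {set T}) x y : x \in S -> y \notin S ->
  exists a b, [/\ a \in S, b \notin S & e a b].
Proof.
move=> xS yS; have /connectP [p pth yE] := econ x y.
elim: p x xS pth yE => [|z p IH] x xS /=; first by move=> _ yE; move: yS; rewrite yE xS.
case/andP=> exz pth yE.
case zS: (z \in S); first exact: IH pth yE.
by exists x, z; rewrite xS zS exz.
Qed.

Lemma eneq x y : e x y -> x != y.
Proof. by apply: contraTneq => ->; rewrite eirr. Qed.

Lemma tri a b c : e a b -> e b c -> e c a -> False.
Proof.
move=> ab bc ca.
have nab := eneq ab; have nbc := eneq bc; have nca := eneq ca.
have H := eacy (x := a) (p := [:: b; c]).
suff : ~~ e c a by rewrite ca.
apply: H => //=; first by rewrite ab bc.
rewrite !inE !negb_or; neqs.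
Qed.

Lemma exists_other (s : seq T) : size s < #|T| -> exists w, w \notin s.
Proof.
move=> hs; case: (boolP [exists w, w \notin s]) => [/existsP //|/existsPn H].
have : #|T| <= size s.
  apply: leq_trans (card_size s); apply: subset_leq_card; apply/subsetP => w _.
  by have := H w; rewrite negbK.
by rewrite leqNgt hs.
Qed.

Lemma cover_le (s : seq T) : (forall w, w \in s) -> #|T| <= size s.
Proof.
move=> H; apply: leq_trans (card_size s); apply: subset_leq_card; apply/subsetP => w _; exact: H.
Qed.

Lemma consec x p : path e x p -> uniq (x :: p) -> forall y z, y \in x :: p -> z \in x :: p -> e y z ->
  (index z (x :: p) == (index y (x :: p)).+1) || (index y (x :: p) == (index z (x :: p)).+1).
Proof.
elim: p x => [|x' p IH] x.
  by move=> _ _ y z; rewrite !inE => /eqP -> /eqP ->; rewrite eirr.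
move=> /= /andP [exx' pth] /andP [xn un].
have key : forall w, w \in x' :: p -> e x w -> w = x'.
  move=> w win exw; apply/eqP/negPn/negP => wx'.
  have wp : w \in p by move: win; rewrite inE (negbTE wx').
  move: pth un xn; case/splitPr: wp => p1 p2 pth un xn.
  have sub : subseq ((x :: x' :: p1) ++ [:: w]) ((x :: x' :: p1) ++ w :: p2).
    apply: cat_subseq; first exact: subseq_refl.
    by rewrite /= eqxx; exact: sub0seq.
  have u2 : uniq ((x :: x' :: p1) ++ [:: w]) by apply: (subseq_uniq sub) => /=; rewrite xn.
  move: pth; rewrite cat_path /= => /and3P [p1p lw _].
  have := eacy (x := x) (p := x' :: rcons p1 w).
  rewrite /= exx' rcons_path p1p lw last_rcons esym exw /=.
  rewrite -cats1 => H; move: (H isT u2); rewrite size_cat /= addn1 ltnS; by move=> /(_ isT).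
move=> y z yin zin eyz.
case: (eqVneq y x) => [yx|yx]; case: (eqVneq z x) => [zx|zx].
- by move: eyz; rewrite yx zx eirr.
- subst y; have zin' : z \in x' :: p by move: zin; rewrite inE (negbTE zx).
  have -> := key z zin' eyz.
  by rewrite /= !eqxx ?(negbTE yx) ?(negbTE zx) ?orbT.
- subst z; have yin' : y \in x' :: p by move: yin; rewrite inE (negbTE yx).
  rewrite esym in eyz; have -> := key y yin' eyz.
  by rewrite /= !eqxx ?(negbTE yx) ?(negbTE zx) ?orbT.
- have yin' : y \in x' :: p by move: yin; rewrite inE (negbTE yx).
  have zin' : z \in x' :: p by move: zin; rewrite inE (negbTE zx).
  have := IH x' pth un y z yin' zin' eyz.
  by rewrite /= !eqSS.
Qed.

Lemma path_iso k x p : uniq (x :: p) -> path e x p -> (forall w, w \in x :: p) ->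
  size (x :: p) = k -> isomorphic_to e (@path_rel k).
Proof.
move=> un pth cov sz.
set s := x :: p in un cov sz.
have lt w : index w s < k by rewrite -sz index_mem cov.
have H : forall y z, index z s = (index y s).+1 -> e y z.
  move=> y z hz.
  have ey : nth x s (index y s) = y := nth_index x (cov y).
  have ez : nth x s (index z s) = z := nth_index x (cov z).
  have ltz : index z s < size s by rewrite index_mem cov.
  rewrite hz in ez ltz.
  have lty : index y s < size p by rewrite /s /= ltnS in ltz.
  have := (elimT (pathP x) pth _ lty).
  by rewrite -/s ey -ez.
exists (fun w => Ordinal (lt w)); split.
  exists (fun i : 'I_k => nth x s i).
  - by move=> w /=; exact: nth_index.
  - move=> i; apply: val_inj; have li : (i : nat) < size s by rewrite sz. exact: (index_uniq x li un).
move=> y z; rewrite /path_rel /=.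
apply/idP/idP.
  by move=> eyz; rewrite orbC; apply: consec => //; apply: cov.
by case/orP => /eqP h; [rewrite esym|]; apply: H.
Qed.


Lemma cyc4 a b c d : e a b -> e b c -> e c d -> e d a -> a != c -> b != d -> False.
Proof.
move=> ab bc cd da ac bd.
have nab := eneq ab; have nbc := eneq bc; have ncd := eneq cd; have nda := eneq da.
have H := eacy (x := a) (p := [:: b; c; d]).
suff : ~~ e d a by rewrite da.
apply: H => //=; first by rewrite ab bc cd.
rewrite !inE !negb_or; neqs.
Qed.

Lemma cyc6 a b c d f g : e a b -> e b c -> e c d -> e d f -> e f g -> e g a ->
  a != c -> a != d -> a != f -> b != d -> b != f -> b != g -> c != f -> c != g -> d != g -> False.
Proof.
move=> ab bc cd df fg ga ac ad af bd bf bg cf cg dg.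
have nab := eneq ab; have nbc := eneq bc; have ncd := eneq cd; have ndf := eneq df.
have nfg := eneq fg; have nga := eneq ga.
have H := eacy (x := a) (p := [:: b; c; d; f; g]).
suff : ~~ e g a by rewrite ga.
apply: H => //=; first by rewrite ab bc cd df fg.
rewrite !inE !negb_or; neqs.
Qed.

Lemma star_iso c : (forall w, w != c -> e c w) -> isomorphic_to e (@star_rel #|T|).
Proof.
move=> hc.
have n0 : 0 < #|T| by apply/card_gt0P; exists c.
pose i0 : 'I_#|T| := Ordinal n0.
pose rc := enum_rank c.
pose sw (i : 'I_#|T|) := if i == i0 then rc else if i == rc then i0 else i.
have swK : involutive sw.
  move=> i; rewrite /sw.
  case: (eqVneq i i0) => [->|h0].
    by case: (eqVneq rc i0) => [//|hr]; rewrite eqxx.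
  case: (eqVneq i rc) => [->|hr]; first by rewrite eqxx.
  by rewrite (negbTE h0) (negbTE hr).
pose g := sw \o enum_rank.
have gbij : bijective g.
  apply: bij_comp; first exact: inv_bij.
  by exists enum_val; [exact: enum_rankK | exact: enum_valK].
have ginj := bij_inj gbij.
have gc : g c = i0.
  rewrite /g /= /sw -/rc eqxx; by case: (eqVneq rc i0).
exists g; split => // x y.
rewrite /star_rel.
have hv z : (val (g z) == 0) = (z == c).
  by rewrite -(inj_eq ginj) gc.
rewrite !hv (inj_eq ginj).
case: (eqVneq x y) => [<-|nxy]; first by rewrite eirr.
case: (eqVneq x c) => [xc|nxc].
  subst x; rewrite /=; apply: hc; by rewrite eq_sym.
case: (eqVneq y c) => [yc|nyc].
  subst y; rewrite /= esym; exact: hc.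
rewrite /=; apply/negbTE/negP => exy.
have ey : e y c by rewrite esym; apply: hc.
exact: (tri exy ey (hc x nxc)).
Qed.

Lemma cross_card (X Y : {set T}) :
  #|cross_edges e X Y| = \sum_(x in X) \sum_(y in Y) (e x y : nat).
Proof.
rewrite pair_big /= -sum1_card big_mkcond [RHS]big_mkcond /=.
apply: eq_bigr => p _; rewrite /cross_edges inE.
by case: (p.1 \in X); case: (p.2 \in Y); case: (e p.1 p.2).
Qed.

Lemma odd_mk u v a b : u != v -> a != b -> a != u -> a != v -> b != u -> b != v ->
  (e u a (+) e v a) != (e u b (+) e v b) -> odd_set e [set u; v].
Proof.
move=> uv ab au av bu bv h.
apply/existsP; exists [set a; b]; rewrite /odd_pair !cards2 uv ab /=.
apply/andP; split.
  rewrite disjoint_subset; apply/subsetP => w; rewrite !inE => /orP [] /eqP ->;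
  by rewrite negb_or ?(eq_sym u) ?(eq_sym v) ?au ?bu ?av ?bv.
rewrite cross_card big_setU1 ?inE // big_set1 !big_setU1 ?inE // !big_set1 /=.
rewrite !oddD !oddb.
by move: h; case: (e u a); case: (e v a); case: (e u b); case: (e v b).
Qed.

Lemma nonodd_const u v a b : u != v -> ~~ odd_set e [set u; v] ->
  a != u -> a != v -> b != u -> b != v -> (e u a (+) e v a) = (e u b (+) e v b).
Proof.
move=> uv no au av bu bv.
case: (eqVneq a b) => [->//|ab].
apply/eqP; move: no; apply: contraNT => h; exact: odd_mk uv ab au av bu bv h.
Qed.

Definition Ap u v := forall w, w != u -> w != v -> e u w = e v w.
Definition Bp u v := forall w, w != u -> w != v -> e u w != e v w.

Lemma Bsym u v : Bp u v -> Bp v u.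
Proof. by move=> B w wv wu; rewrite eq_sym; exact: B. Qed.

Lemma Bflip u v w : Bp u v -> w != u -> w != v -> e v w = ~~ e u w.
Proof. by move=> B wu wv; move: (B w wu wv); case: (e u w); case: (e v w). Qed.

Lemma AorB u v : u != v -> ~~ odd_set e [set u; v] -> Ap u v \/ Bp u v.
Proof.
move=> uv no.
case: (boolP [exists w, [&& w != u, w != v & e u w != e v w]]) =>
  [/existsP [w0 /and3P [w0u w0v h0]]|/existsPn H].
  right => w wu wv; have := nonodd_const uv no wu wv w0u w0v; move: h0.
  by case: (e u w0); case: (e v w0); case: (e u w); case: (e v w).
left => w wu wv; move: (H w); rewrite wu wv /= negbK => /eqP //.
Qed.

Hypothesis hn : 4 <= #|T|.

Lemma A_struct u v : u != v -> Ap u v ->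
  ~~ e u v /\ exists c, (forall y, e u y = (y == c)) /\ (forall y, e v y = (y == c)).
Proof.
move=> uv A.
have nuv : ~~ e u v.
  apply/negP => euv.
  have [w ws] := exists_other (s := [:: u; v]) (leq_trans (isT : 3 <= 4) hn).
  have [a [b [aS bS ab]]] := ecut (S := [set u; v]) (x := u) (y := w)
     ltac:(by rewrite !inE eqxx) ltac:(by move: ws; rewrite !inE).
  move: bS; rewrite !inE negb_or => /andP [bu bv].
  have Ab := A b bu bv.
  have [eub evb] : e u b /\ e v b.
    by move: aS; rewrite !inE => /orP [] /eqP E; subst a; split => //; rewrite ?Ab // -Ab.
  apply: (tri euv evb); by rewrite esym.
split => //.
have [a [c [aS cS ac]]] := ecut (S := [set u]) (x := u) (y := v)
   ltac:(by rewrite !inE eqxx) ltac:(by rewrite !inE eq_sym).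
move: aS cS; rewrite !inE => /eqP E cu; subst a.
have cv : c != v by apply: contraNneq nuv => <-.
have evc : e v c by rewrite -A.
have hcu : forall y, e u y = (y == c).
  move=> y; case: (eqVneq y c) => [->//|yc]; apply/negbTE/negP => euy.
  have yu : y != u by rewrite eq_sym; exact: eneq.
  have yv : y != v by apply: contraNneq nuv => <-.
  have evy : e v y by rewrite -A.
  have ecv : e c v by rewrite esym.
  have eyu : e y u by rewrite esym.
  by apply: (cyc4 ac ecv evy eyu uv); rewrite eq_sym.
exists c; split => // y.
case: (eqVneq y c) => [->//|yc]; apply/negbTE/negP => evy.
have yu : y != u by apply: contraNneq nuv => E; rewrite -E esym.
have yv : y != v by rewrite eq_sym; exact: eneq.
by move: (hcu y); rewrite A // evy (negbTE yc).
Qed.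

Lemma B_uniq u v v' : u != v -> u != v' -> v != v' -> Bp u v -> Bp u v' ->
  exists c, forall w, w != c -> e c w.
Proof.
move=> uv uv' vv' Bv Bv'.
have h1 := Bv v' ltac:(by rewrite eq_sym) ltac:(by rewrite eq_sym).
have h2 := Bv' v ltac:(by rewrite eq_sym) vv'.
case: (boolP (e v v')) => evv'.
  exfalso.
  have euv' : e u v' = false by move: h1; rewrite evv'; case: (e u v').
  have euv : e u v = false by move: h2; rewrite (esym v' v) evv'; case: (e u v).
  have nb : forall w, w != v' -> e v w = false.
    move=> w wv'; apply/negbTE/negP => evw.
    have wv : w != v by rewrite eq_sym; exact: eneq.
    have wu : w != u by apply: contraTneq evw => ->; rewrite esym euv.
    have euw : e u w = false by move: (Bflip Bv wu wv); rewrite evw; case: (e u w).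
    have ev'w : e v' w by rewrite (Bflip Bv' wu wv') euw.
    have e1 : e w v' by rewrite esym.
    have e2 : e v' v by rewrite esym.
    exact: (tri evw e1 e2).
  have nb' : forall w, w != v -> e v' w = false.
    move=> w wv; apply/negbTE/negP => evw.
    have wv' : w != v' by rewrite eq_sym; exact: eneq.
    have wu : w != u by apply: contraTneq evw => ->; rewrite esym euv'.
    have euw : e u w = false by move: (Bflip Bv' wu wv'); rewrite evw; case: (e u w).
    have evw' : e v w by rewrite (Bflip Bv wu wv) euw.
    have e1 : e w v by rewrite esym.
    exact: (tri evw e1 evv').
  have [a [b [aS bS ab]]] := ecut (S := [set v; v']) (x := v) (y := u)
     ltac:(by rewrite !inE eqxx) ltac:(by rewrite !inE negb_or uv uv').
  move: bS; rewrite !inE negb_or => /andP [bv bv'].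
  by move: aS; rewrite !inE => /orP [] /eqP E; subst a; [rewrite nb in ab | rewrite nb' in ab].
have euv' : e u v' by move: h1; rewrite (negbTE evv'); case: (e u v').
have euv : e u v by move: h2; rewrite (esym v' v) (negbTE evv'); case: (e u v).
exists u => w wu.
case: (eqVneq w v) => [->//|wv]; case: (eqVneq w v') => [->//|wv'].
apply/negPn/negP => euw.
have evw : e v w by move: (Bv w wu wv); rewrite (negbTE euw); case: (e v w).
have ev'w : e v' w by move: (Bv' w wu wv'); rewrite (negbTE euw); case: (e v' w).
have e1 : e w v' by rewrite esym.
have e2 : e v' u by rewrite esym.
by apply: (cyc4 euv evw e1 e2 _ vv'); rewrite eq_sym.
Qed.


Lemma ex_leaf : exists z w, forall y, e z y = (y == w).
Proof.
have [x0 _] : exists x0 : T, x0 \in T by apply/card_gt0P; apply: leq_trans hn.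
suff H : forall k x p, #|T| < k + size p -> path e x p -> uniq (x :: p) ->
    exists z w, forall y, e z y = (y == w).
  by apply: (H #|T|.+1 x0 [::]) => //; rewrite addn0.
elim=> [|k IH] x p hk pth un.
  have hsz : size (x :: p) <= #|T| by rewrite -(card_uniqP un); exact: max_card.
  by move: hsz hk => /=; lia.
set z := last x p.
case: (boolP [exists y, e z y && (y \notin x :: p)]) =>
  [/existsP [y /andP [zy yn]]|/existsPn H].
  apply: (IH x (rcons p y)).
  - by rewrite size_rcons; lia.
  - by rewrite rcons_path pth.
  - by rewrite -rcons_cons rcons_uniq yn un.
have [o os] := exists_other (s := [:: z]) (leq_trans (isT : 2 <= 4) hn).
have [a [w [aS wS aw]]] := ecut (S := [set z]) (x := z) (y := o)
   ltac:(by rewrite !inE eqxx) ltac:(by move: os; rewrite !inE).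
move: aS; rewrite inE => /eqP E; subst a.
have zin : z \in x :: p by exact: mem_last.
have iz : index z (x :: p) = size p.
  by rewrite /z (last_nth x) index_uniq.
have inN : forall y, e z y -> y \in x :: p.
  by move=> y zy; move: (H y); rewrite zy /= negbK.
have idx : forall y, e z y -> index y (x :: p) = (size p).-1.
  move=> y zy; have yin := inN y zy.
  have := consec pth un zin yin zy; rewrite iz.
  have : index y (x :: p) < size (x :: p) by rewrite index_mem.
  by rewrite /=; lia.
exists z, w => y; apply/idP/eqP => [zy|->//].
rewrite -(nth_index x (inN y zy)) -(nth_index x (inN w aw)).
by rewrite (idx y zy) (idx w aw).
Qed.

Lemma L1 u v a b : u != v -> ~~ e u v -> Bp u v -> e u a -> e a b -> e b v ->
  forall x, e u x -> x != a -> forall y, e x y = (y == u).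
Proof.
move=> uv nuv B ua ab bv x ux xa y.
have au : a != u by rewrite eq_sym; exact: eneq.
have av : a != v by apply: contraNneq nuv => E; rewrite -E.
have va : e v a = false by rewrite (Bflip B au av) ua.
have bu : b != u by apply: contraNneq nuv => E; rewrite -E.
have bv' : b != v by exact: eneq.
have ub : e u b = false by move: (Bflip B bu bv'); rewrite (esym v b) bv; case: (e u b).
have nab : a != b by exact: eneq.
have xu : x != u by rewrite eq_sym; exact: eneq.
have xv : x != v by apply: contraNneq nuv => E; rewrite -E.
have vx : e v x = false by rewrite (Bflip B xu xv) ux.
have xb : x != b by apply: contraTneq ux => ->; rewrite ub.
case: (eqVneq y u) => [->|yu]; first by rewrite esym.
apply/negbTE/negP => xy.
have yx : y != x by rewrite eq_sym; exact: eneq.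
have yv : y != v by apply: contraTneq xy => ->; rewrite esym vx.
case: (boolP (e u y)) => uy.
  have yu' : e y u by rewrite esym.
  exact: (tri ux xy yu').
have vy : e v y by rewrite (Bflip B yu yv).
have yv' : e y v by rewrite esym.
have ba : e b a by rewrite esym.
have au' : e a u by rewrite esym.
have vb : e v b by rewrite esym.
case: (eqVneq y b) => [yb|yb].
  subst y.
  by apply: (cyc4 ux xy ba au' _ xa); rewrite eq_sym.
have ya : y != a by apply: contraTneq vy => ->; rewrite va.
apply: (cyc6 ux xy yv' vb ba au') => //; by rewrite eq_sym.
Qed.

Lemma L3 u v : e u v -> Bp u v -> forall x, e u x -> x != v -> forall y, e x y = (y == u).
Proof.
move=> uv B x ux xv y.
have xu : x != u by rewrite eq_sym; exact: eneq.
have vx : e v x = false by rewrite (Bflip B xu xv) ux.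
case: (eqVneq y u) => [->|yu]; first by rewrite esym.
apply/negbTE/negP => xy.
have yv : y != v by apply: contraTneq xy => ->; rewrite esym vx.
case: (boolP (e u y)) => uy.
  have yu' : e y u by rewrite esym.
  exact: (tri ux xy yu').
have vy : e v y by rewrite (Bflip B yu yv).
have yv' : e y v by rewrite esym.
have vu : e v u by rewrite esym.
by apply: (cyc4 ux xy yv' vu _ xv); rewrite eq_sym.
Qed.


Definition Lf w := [set x | e w x && is_leaf e x].

Lemma inLf w x : (forall y, e x y = (y == w)) -> x \in Lf w.
Proof.
move=> h; rewrite inE esym h eqxx /= /is_leaf.
have -> : [set y | e x y] = [set w] by apply/setP => y; rewrite !inE h.
by rewrite cards1.
Qed.

Lemma LfD w : #|Lf w| <= Dleaf e.
Proof. exact: (leq_bigmax (F := fun w => #|Lf w|) w). Qed.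

Hypothesis np4 : ~ isomorphic_to e (@path_rel 4).
Hypothesis np5 : ~ isomorphic_to e (@path_rel 5).
Hypothesis np6 : ~ isomorphic_to e (@path_rel 6).

Lemma D2 u v : u != v -> Bp u v -> 2 <= Dleaf e.
Proof.
move=> uv B; rewrite leqNgt; apply/negP => hD.
have le1 w : #|Lf w| <= 1 by apply: leq_trans (LfD w) _; rewrite -ltnS.
have uq w x x' : x \in Lf w -> x' \in Lf w -> x = x'.
  by move=> hx hx'; apply: (card_le1_eqP (le1 w)).
have cases w : w != u -> w != v -> e u w || e v w.
  by move=> wu wv; rewrite (Bflip B wu wv); case: (e u w).
have B' := Bsym B.
have vu : v != u by rewrite eq_sym.
case: (boolP (e u v)) => euv.
  have evu : e v u by rewrite esym.
  have lu x : e u x -> x != v -> x \in Lf u.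
    by move=> ux xv; apply: inLf; exact: L3 euv B x ux xv.
  have lv y : e v y -> y != u -> y \in Lf v.
    by move=> vy yu; apply: inLf; exact: L3 evu B' y vy yu.
  have [w1 w1s] := exists_other (s := [:: u; v]) (leq_trans (isT : 3 <= 4) hn).
  move: w1s; rewrite !inE !negb_or => /andP [w1u w1v].
  have [w2 w2s] := exists_other (s := [:: u; v; w1]) hn.
  move: w2s; rewrite !inE !negb_or => /and3P [w2u w2v w2w1].
  have [x [y [ux xv vy yu]]] : exists x y, [/\ e u x, x != v, e v y & y != u].
    case/orP: (cases w1 w1u w1v) => h1; case/orP: (cases w2 w2u w2v) => h2.
    - by move: w2w1; rewrite (uq u w2 w1 (lu _ h2 w2v) (lu _ h1 w1v)) eqxx.
    - by exists w1, w2.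
    - by exists w2, w1.
    - by move: w2w1; rewrite (uq v w2 w1 (lv _ h2 w2u) (lv _ h1 w1u)) eqxx.
  apply: np4.
  have xu : x != u by rewrite eq_sym; exact: eneq.
  have yv : y != v by rewrite eq_sym; exact: eneq.
  have uy : e u y = false by rewrite (Bflip B' yv yu) vy.
  have xy : x != y by apply: contraTneq ux => ->; rewrite uy.
  have xuE : e x u by rewrite esym.
  apply: (path_iso (x := x) (p := [:: u; v; y])) => //.
  - by rewrite /= !inE !negb_or; neqs.
  - by rewrite /=; neqs.
  - move=> w; rewrite !inE.
    case: (eqVneq w u) => [->|wu]; first by rewrite ?eqxx !orbT.
    case: (eqVneq w v) => [->|wv]; first by rewrite ?eqxx !orbT.
    case/orP: (cases w wu wv) => h.
      by rewrite (uq u w x (lu _ h wv) (lu _ ux xv)) eqxx.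
    by rewrite (uq v w y (lv _ h wu) (lv _ vy yu)) eqxx !orbT.
have [a [b [aS bS ab]]] := ecut (S := [set w | (w == u) || e u w]) (x := u) (y := v)
   ltac:(by rewrite inE eqxx) ltac:(by rewrite inE negb_or vu).
move: aS bS; rewrite !inE negb_or => aS /andP [bu ub].
have ua : e u a.
  by case/orP: aS => [/eqP E|//]; subst a; rewrite ab in ub.
have au : a != u by rewrite eq_sym; exact: eneq.
have av : a != v by apply: contraNneq euv => E; rewrite -E.
have va : e v a = false by rewrite (Bflip B au av) ua.
have bv : b != v by apply: contraTneq ab => ->; rewrite esym va.
have vb : e v b by rewrite (Bflip B bu bv) (negbTE ub).
have bvE : e b v by rewrite esym.
have ba : e b a by rewrite esym.
have auE : e a u by rewrite esym.
have nvu : ~~ e v u by rewrite esym.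
have ab' : a != b by exact: eneq.
have lu x : e u x -> x != a -> x \in Lf u.
  by move=> ux xa; apply: inLf; exact: (L1 uv euv B ua ab bvE ux xa).
have lv y : e v y -> y != b -> y \in Lf v.
  by move=> vy yb; apply: inLf; exact: (L1 vu nvu B' vb ba auE vy yb).
have cov w : w = u \/ w = v \/ w = a \/ w = b \/ (e u w /\ w != a) \/ (e v w /\ w != b).
  case: (eqVneq w u) => [->|wu]; first by left.
  case: (eqVneq w v) => [->|wv]; first by right; left.
  case: (eqVneq w a) => [->|wa]; first by do 2 right; left.
  case: (eqVneq w b) => [->|wb]; first by do 3 right; left.
  by case/orP: (cases w wu wv) => h; do 4 right; [left | right].
have xfacts x : e u x -> x != a -> [/\ x != u, x != v, x != b & e v x = false].
  move=> ux xa; have xu : x != u by rewrite eq_sym; exact: eneq.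
  have xv : x != v by apply: contraNneq euv => E; rewrite -E.
  split => //; first by apply: contraTneq ux => ->; rewrite (negbTE ub).
  by rewrite (Bflip B xu xv) ux.
have yfacts y : e v y -> y != b -> [/\ y != v, y != u, y != a & e u y = false].
  move=> vy yb; have yv : y != v by rewrite eq_sym; exact: eneq.
  have yu : y != u by apply: contraNneq nvu => E; rewrite -E.
  split => //; first by apply: contraTneq vy => ->; rewrite va.
  by rewrite (Bflip B' yv yu) vy.
case: (boolP [exists x, e u x && (x != a)]) => [/existsP [x /andP [ux xa]]|/existsPn nx];
case: (boolP [exists y, e v y && (y != b)]) => [/existsP [y /andP [vy yb]]|/existsPn ny].
- have [xu xv xb vx] := xfacts x ux xa.
  have [yv yu ya uy] := yfacts y vy yb.
  have xy : x != y by apply: contraFneq vx => ->.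
  have xuE : e x u by rewrite esym.
  apply: np6; apply: (path_iso (x := x) (p := [:: u; a; b; v; y])) => //.
  + by rewrite /= !inE !negb_or; neqs.
  + by rewrite /=; neqs.
  + move=> w; rewrite !inE.
    case: (cov w) => [->|[->|[->|[->|[[h1 h2]|[h1 h2]]]]]]; rewrite ?eqxx ?orbT //.
      by rewrite (uq u w x (lu _ h1 h2) (lu _ ux xa)) eqxx.
    by rewrite (uq v w y (lv _ h1 h2) (lv _ vy yb)) eqxx !orbT.
- have [xu xv xb vx] := xfacts x ux xa.
  have xuE : e x u by rewrite esym.
  apply: np5; apply: (path_iso (x := x) (p := [:: u; a; b; v])) => //.
  + by rewrite /= !inE !negb_or; neqs.
  + by rewrite /=; neqs.
  + move=> w; rewrite !inE.
    case: (cov w) => [->|[->|[->|[->|[[h1 h2]|[h1 h2]]]]]]; rewrite ?eqxx ?orbT //.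
      by rewrite (uq u w x (lu _ h1 h2) (lu _ ux xa)) eqxx.
    by move: (ny w); rewrite h1 h2.
- have [yv yu ya uy] := yfacts y vy yb.
  apply: np5; apply: (path_iso (x := u) (p := [:: a; b; v; y])) => //.
  + by rewrite /= !inE !negb_or; neqs.
  + by rewrite /=; neqs.
  + move=> w; rewrite !inE.
    case: (cov w) => [->|[->|[->|[->|[[h1 h2]|[h1 h2]]]]]]; rewrite ?eqxx ?orbT //.
      by move: (nx w); rewrite h1 h2.
    by rewrite (uq v w y (lv _ h1 h2) (lv _ vy yb)) eqxx !orbT.
- apply: np4; apply: (path_iso (x := u) (p := [:: a; b; v])) => //.
  + by rewrite /= !inE !negb_or; neqs.
  + by rewrite /=; neqs.
  + move=> w; rewrite !inE.
    case: (cov w) => [->|[->|[->|[->|[[h1 h2]|[h1 h2]]]]]]; rewrite ?eqxx ?orbT //.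
      by move: (nx w); rewrite h1 h2.
    by move: (ny w); rewrite h1 h2.
Qed.


Hypothesis nstar : ~ isomorphic_to e (@star_rel #|T|).

Definition Pset u := [set v | (v != u) && ~~ odd_set e [set u; v]].

Lemma AB_excl u v : u != v -> Ap u v -> Bp u v -> False.
Proof.
move=> uv A B.
have [w ws] := exists_other (s := [:: u; v]) (leq_trans (isT : 3 <= 4) hn).
move: ws; rewrite !inE negb_or => /andP [wu wv].
by move: (B w wu wv); rewrite (A w wu wv) eqxx.
Qed.

Lemma D1 : 0 < Dleaf e.
Proof.
have [z [w h]] := ex_leaf.
apply: leq_trans (LfD w); apply/card_gt0P; exists z; exact: inLf.
Qed.

Lemma per_vertex u : #|Pset u| < Dleaf e.
Proof.
case: (boolP [exists v, (v != u) && [forall w, (w != u) ==> (w != v) ==> (e u w != e v w)]]).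
  case/existsP => v /andP [vu /forallP hB].
  have Bv : Bp u v by move=> w wu wv; move: (hB w); rewrite wu wv.
  have uv : u != v by rewrite eq_sym.
  have sub : Pset u \subset [set v].
    apply/subsetP => v'; rewrite !inE => /andP [v'u no].
    have uv' : u != v' by rewrite eq_sym.
    case: (AorB uv' no) => [Av'|Bv'].
      exfalso.
      have [nuv' [c [hcu hcv']]] := A_struct uv' Av'.
      have vv' : v' != v.
        by apply/negP => /eqP E; subst v'; exact: (AB_excl uv Av' Bv).
      have evv' : e v v'.
        by rewrite (Bflip Bv v'u vv') nuv'.
      have vc : v = c by apply/eqP; rewrite -hcv' esym.
      subst v.
      apply: nstar; apply: (star_iso (c := c)) => w wc.
      case: (eqVneq w u) => [->|wu]; first by rewrite esym hcu.
      by rewrite (Bflip Bv wu wc) hcu (negbTE wc).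
    case: (eqVneq v' v) => // hne; exfalso.
    have vv' : v != v' by rewrite eq_sym.
    have [c hc] := B_uniq uv uv' vv' Bv Bv'.
    by apply: nstar; exact: star_iso hc.
  apply: leq_ltn_trans (subset_leq_card sub) _; rewrite cards1.
  exact: D2 uv Bv.
move/existsPn => nB.
have Aall v : v \in Pset u -> Ap u v.
  rewrite inE => /andP [vu no].
  have uv : u != v by rewrite eq_sym.
  case: (AorB uv no) => // Bv; exfalso.
  have hB : [forall w, (w != u) ==> (w != v) ==> (e u w != e v w)].
    by apply/forallP => w; apply/implyP => wu; apply/implyP => wv; exact: Bv.
  by move: (nB v); rewrite vu hB.
case: (eqVneq (Pset u) set0) => [->|ne]; first by rewrite cards0 D1.
case/set0Pn: ne => v0 v0P.
have uv0 : u != v0 by move: v0P; rewrite inE eq_sym => /andP [].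
have [nuv0 [c [hcu _]]] := A_struct uv0 (Aall v0 v0P).
have sub : Pset u \subset Lf c :\ u.
  apply/subsetP => v vP; rewrite in_setD1.
  have vu : v != u by move: vP; rewrite inE => /andP [].
  have uv : u != v by rewrite eq_sym.
  have [_ [c' [hcu' hcv']]] := A_struct uv (Aall v vP).
  have cc : c' = c by apply/eqP; rewrite -hcu hcu'.
  subst c'; rewrite vu /=; exact: inLf.
have uL : u \in Lf c := inLf hcu.
apply: leq_ltn_trans (subset_leq_card sub) _.
have := LfD c; rewrite (cardsD1 u (Lf c)) uL add1n; exact.
Qed.

End Tree.

Lemma handshake (T : finType) (e : rel T) :
  \sum_(u : T) #|[set v | (v != u) && odd_set e [set u; v]]| <= 2 * lambda_edges e.
Proof.
pose P (p : T * T) := (p.2 != p.1) && odd_set e [set p.1; p.2].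
have E1 : \sum_(u : T) #|[set v | (v != u) && odd_set e [set u; v]]| = \sum_(p | P p) 1.
  rewrite [RHS]big_mkcond /= -(pair_big xpredT xpredT (fun u v => if P (u, v) then 1 else 0)) /=.
  apply: eq_bigr => u _; rewrite -sum1_card big_mkcond /=; apply: eq_bigr => v _.
  by rewrite inE.
pose Q (X : {set T}) := (#|X| == 2) && odd_set e X.
pose f (p : T * T) := [set p.1; p.2].
rewrite E1 (partition_big f Q); last first.
  by move=> [x y]; rewrite /P /Q /f /= => /andP [yx ->]; rewrite cards2 (eq_sym x y) yx.
apply: (@leq_trans (\sum_(X | Q X) 2)).
  apply: leq_sum => X _; rewrite sum1dep_card.
  set F := [set p | _].
  case: (eqVneq F set0) => [->|ne]; first by rewrite cards0.
  case/set0Pn: ne => [[a b]]; rewrite inE /P /f /= => /andP [/andP [ba _] /eqP fX].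
  apply: (@leq_trans #|[set (a, b); (b, a)]|); last by rewrite cards2 ltnS leq_b1.
  apply: subset_leq_card; apply/subsetP => [[x y]]; rewrite !inE /= => /andP [/andP [yx _] /eqP E].
  have hx : x \in [set a; b] by rewrite fX -E !inE eqxx.
  have hy : y \in [set a; b] by rewrite fX -E !inE eqxx orbT.
  move: yx hx hy; rewrite !inE => yx /orP [] /eqP ex /orP [] /eqP ey; subst x y;
    by rewrite ?eqxx ?orbT // in yx *.
rewrite /lambda_edges -sum1dep_card big_distrr /=.
by apply: leq_sum => X _; rewrite muln1.
Qed.

Unset Implicit Arguments.

Theorem lemma2 (T : finType) (e : rel T) :
  is_tree e ->
  4 <= #|T| ->
  ~ isomorphic_to e (@star_rel #|T|) ->
  ~ isomorphic_to e (@path_rel 4) ->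
  ~ isomorphic_to e (@path_rel 5) ->
  ~ isomorphic_to e (@path_rel 6) ->
  #|T| * (#|T| - Dleaf e) <= 2 * lambda_edges e.
Proof.
move=> [[esym eirr] [econ eacy]] hn nstar np4 np5 np6.
have deg u : #|T| - Dleaf e <= #|[set v | (v != u) && odd_set e [set u; v]]|.
  have hP := per_vertex esym eirr econ eacy hn np4 np5 np6 nstar u.
  have hc := cardsID [set v | odd_set e [set u; v]] [set~ u].
  rewrite cardsC1 in hc.
  have E1 : [set~ u] :&: [set v | odd_set e [set u; v]] =
            [set v | (v != u) && odd_set e [set u; v]] by apply/setP => v; rewrite !inE.
  have E2 : [set~ u] :\: [set v | odd_set e [set u; v]] = Pset e u.
    by apply/setP => v; rewrite !inE andbC.
  rewrite E1 E2 in hc.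
  have n0 : 0 < #|T| by apply: leq_trans hn.
  move: hc hP; set a := #|[set v | _]|; set b := #|Pset e u|; set N := #|T|.
  move: n0; rewrite -/N; lia.
apply: leq_trans (handshake e).
have -> : #|T| * (#|T| - Dleaf e) = \sum_(u : T) (#|T| - Dleaf e).
  by rewrite sum_nat_const.
by apply: leq_sum => u _; exact: deg.
Qed.
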